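(* Let $\mathcal{G}$ be a signed digraph with signed Laplacian $L$. (1) If $L$ has corank $1$, then $\mathcal{G}$ has a rooted spanning tree. (2) If $-L$ is EEP, or if $L$ is weight balanced and of corank $1$, then $L$ is irreducible (equivalently, $\mathcal{G}$ is strongly connected).
   Context: A signed digraph is $\mathcal{G}=(\mathcal{V},\mathcal{E},A)$ with $\mathcal{V}=\{1,\dots,n\}$, real weighted adjacency matrix $A$ (entries of any sign), and $A_{ij}\neq0$ iff $(j,i)\in\mathcal{E}$ is a directed edge from $j$ to $i$. Its signed Laplacian is $L=\Sigma-A$ with $\Sigma=\mathrm{diag}(\sigma_i)$, $\sigma_i=\sum_jA_{ij}$. $\mathcal{G}$ has a rooted spanning tree if there is a node $j$ from which every node can be reached by a directed path of edges in $\mathcal{E}$; $\mathcal{G}$ is strongly connected if every node can be reached from every other node. $L$ is irreducible if there is no permutation matrix $P$ with $P^\top LP$ block upper triangular with two nontrivial square diagonal blocks. Weight balanced means $L^\top\mathbf{1}=0$. $M$ is EEP if there is $t_0\ge0$ with $e^{Mt}$ entrywise positive for all $t\ge t_0$. Corank means dimension of the kernel. *)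

(* Defs.v *)
From HB Require Import structures.
From mathcomp Require Import all_boot all_order all_algebra all_fingroup.
From mathcomp Require Import all_classical all_reals all_analysis.
Set Implicit Arguments. Unset Strict Implicit. Unset Printing Implicit Defensive.
Import Order.TTheory GRing.Theory Num.Theory.
Local Open Scope ring_scope.

Section SignedDigraph.
Variables (R : realType) (n : nat).

Definition edge (A : 'M[R]_n) : rel 'I_n := fun j i => A i j != 0.

Definition laplacian (A : 'M[R]_n) : 'M[R]_n :=
  \matrix_(i, j) ((i == j)%:R * (\sum_(k < n) A i k) - A i j).

Definition has_rooted_spanning_tree (A : 'M[R]_n) : Prop :=
  exists r : 'I_n, forall i : 'I_n, connect (edge A) r i.

Definition strongly_connected (A : 'M[R]_n) : Prop :=
  forall i j : 'I_n, connect (edge A) i j.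

Definition corank (M : 'M[R]_n) : nat := (n - \rank M)%N.

Definition weight_balanced (L : 'M[R]_n) : Prop :=
  forall j : 'I_n, \sum_(i < n) L i j = 0.

(* Irreducible: no permutation P such that P^T L P is block upper triangular
   with two nontrivial square diagonal blocks (sizes k and n-k, 0<k<n),
   i.e. the lower-left (n-k) x k block vanishes. *)
Definition irreducible_mx (L : 'M[R]_n) : Prop :=
  ~ exists (s : 'S_n) (k : nat), [/\ (0 < k)%N, (k < n)%N &
      forall i j : 'I_n, (k <= i)%N -> (j < k)%N -> L (s i) (s j) = 0].

Definition expmx_entry (M : 'M[R]_n) (t : R) (i j : 'I_n) : R :=
  limn (fun N : nat => \sum_(k < N) (t ^+ k / (k`!)%:R) * (M ^+ k) i j).

Definition EEP (M : 'M[R]_n) : Prop :=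
  exists t0 : R, 0 <= t0 /\
    forall t : R, t0 <= t -> forall i j : 'I_n, 0 < expmx_entry M t i j.

End SignedDigraph.

(* Main.v *)
Require Import Defs.
From HB Require Import structures.
From mathcomp Require Import all_boot all_order all_algebra all_fingroup.
From mathcomp Require Import all_classical all_reals all_analysis.
Import Order.TTheory GRing.Theory Num.Theory.
Local Open Scope ring_scope.
Set Implicit Arguments. Unset Strict Implicit.

Lemma connect_ind (T : finType) (e : rel T) (P : T -> bool) x y :
  (forall a b, e a b -> P a -> P b) -> connect e x y -> P x -> P y.
Proof.
move=> H /connectP [p pth ->]; elim: p x pth => //= a p IH x /andP [exa pa] Px.
exact: IH pa (H _ _ exa Px).
Qed.

Lemma sub_ann (R : realType) m n p (u : 'rV[R]_n) (A : 'M[R]_(m, n)) (B : 'M[R]_(n, p)) :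
  (u <= A)%MS -> A *m B = 0 -> u *m B = 0.
Proof. by move=> /submxP [D ->] AB; rewrite -mulmxA AB mulmx0. Qed.

Lemma key (R : realType) n (L : 'M[R]_n) (S : {set 'I_n}) (s : 'I_n) :
  s \in S ->
  (forall i j, i \in S -> j \notin S -> L i j = 0) ->
  (forall i, \sum_j L i j = 0) ->
  exists w : 'rV[R]_n, [/\ w != 0, w *m L = 0 & forall c, c \notin S -> w 0 c = 0].
Proof.
move=> sS clS rs.
pose dS : 'rV[R]_n := \row_i (i \in S)%:R.
pose dC : 'rV[R]_n := \row_i (i \in ~: S)%:R.
pose DS := diag_mx dS. pose DC := diag_mx dC.
pose K := DS *m L *m DS.
have Kij : forall i j, K i j = (i \in S)%:R * L i j * (j \in S)%:R.
  by move=> i j; rewrite /K mul_mx_diag mxE mul_diag_mx !mxE.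
clearbody K.
have eK : dS *m K^T = 0.
  apply/rowP => i; rewrite !mxE.
  case iS: (i \in S).
    rewrite -[RHS](rs i); apply: eq_bigr => j _; rewrite !mxE Kij iS.
    case jS: (j \in S); first by rewrite !mul1r mulr1.
    by rewrite clS ?jS // !mulr0.
  by apply: big1 => j _; rewrite !mxE Kij iS !mul0r mulr0.
have CK : DC *m K^T = 0.
  apply/matrixP => i j; rewrite mul_diag_mx !mxE Kij !inE.
  by case: (i \in S); rewrite ?mulr0 ?mul0r.
have CS : DC *m DS = 0.
  by apply/matrixP => i j; rewrite mul_diag_mx !mxE !inE; case: (i \in S); case: (i == j); rewrite ?mulr0 ?mul0r.
have eC : ~~ (dS <= DC)%MS.
  apply/negP => /sub_ann /(_ CS) /rowP /(_ s); rewrite mul_mx_diag !mxE sS mulr1.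
  by move/eqP; rewrite oner_eq0.
have lt1 : (DC < DC + dS)%MS.
  rewrite ltmxE addsmxSl /=; apply/negP; rewrite addsmx_sub => /andP [_ H].
  by rewrite H in eC.
have sk : (DC + dS <= kermx K^T)%MS.
  rewrite addsmx_sub; apply/andP; split; rewrite sub_kermx; [rewrite CK|rewrite eK] => //.

have rk : (\rank DC < \rank (kermx K))%N.
  rewrite mxrank_ker -(mxrank_tr K) -mxrank_ker.
  exact: leq_trans (rank_ltmx lt1) (mxrankS sk).
have nsub : ~~ (kermx K <= DC)%MS by apply/negP => /mxrankS; rewrite leqNgt rk.
have [i Hi] : exists i, ~~ (row i (kermx K) <= DC)%MS.
  case/boolP: [exists i, ~~ (row i (kermx K) <= DC)%MS] => [/existsP //|/existsPn H].
  by case/negP: nsub; apply/row_subP => i; move: (H i); rewrite negbK.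
pose z := row i (kermx K).
have zK : z *m K = 0 by apply/eqP; rewrite -sub_kermx row_sub.
have DSC : DS + DC = 1%:M.
  apply/matrixP => a b; rewrite !mxE !inE.
  by case: (a \in S); case: (a == b); rewrite ?mulr0 ?mulr1 ?addr0 ?add0r.
have DSL : DS *m L = K.
  apply/matrixP => a b; rewrite Kij mul_diag_mx !mxE.
  case aS: (a \in S); last by rewrite !mul0r.
  case bS: (b \in S); first by rewrite mulr1.
  by rewrite clS ?aS ?bS // !mulr0.
exists (z *m DS); split.
- apply/negP => /eqP w0; case/negP: Hi.
  suff -> : row i (kermx K) = z *m DC by exact: submxMl.
  by rewrite -[LHS]mulmx1 -DSC mulmxDr w0 add0r.
- by rewrite -mulmxA DSL zK.
- by move=> c cS; rewrite mul_mx_diag !mxE (negPf cS) mulr0.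
Qed.

Lemma kern1 (R : realType) n (L : 'M[R]_n) (u v : 'rV[R]_n) :
  (n - \rank L)%N = 1%N -> u != 0 -> u *m L = 0 -> v *m L = 0 -> exists a, v = a *: u.
Proof.
move=> H u0 uL vL.
have uk : (u <= kermx L)%MS by rewrite sub_kermx uL.
have : (u == kermx L)%MS.
  by rewrite -(mxrank_leqif_eq uk).2 mxrank_ker H rank_rV u0.
case/andP => _ ku; apply/sub_rVP; apply: submx_trans ku.
by rewrite sub_kermx vL.
Qed.

Lemma lap_offdiag (R : realType) n (A : 'M[R]_n) i j :
  i != j -> laplacian A i j = - A i j.
Proof. by move=> /negPf ij; rewrite mxE ij mul0r sub0r. Qed.

Lemma lap_rowsum (R : realType) n (A : 'M[R]_n) i :
  \sum_j laplacian A i j = 0.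
Proof.
under eq_bigr do rewrite mxE.
rewrite sumrB (bigD1 i) //= eqxx mul1r.
rewrite [X in _ + X - _]big1 ?addr0 ?subrr // => j /negPf.
by rewrite eq_sym => ->; rewrite mul0r.
Qed.

Definition Anc (R : realType) n (A : 'M[R]_n) (y : 'I_n) : {set 'I_n} :=
  [set k | connect (edge A) k y].

Lemma Anc_closed (R : realType) n (A : 'M[R]_n) y i j :
  i \in Anc A y -> j \notin Anc A y -> laplacian A i j = 0.
Proof.
rewrite !inE => iy jy.
have ij : i != j by apply: contraNneq jy => <-.
rewrite lap_offdiag //; apply/eqP; rewrite oppr_eq0.
apply: contraNT jy => Aij.
apply: connect_trans iy; exact: connect1.
Qed.

Lemma pow_zero (R : realType) n (A : 'M[R]_n) i k a :
  ~~ connect (edge A) i a -> ((- laplacian A) ^+ k) a i = 0.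
Proof.
elim: k a => [|k IH] a nia.
  rewrite mxE; case: eqP => // ai; by rewrite ai connect0 in nia.
rewrite exprS mxE; apply: big1 => b _.
case/boolP: (connect (edge A) i b) => ib; last by rewrite IH // mulr0.
have ab : a != b by apply: contraNneq nia => ->.
rewrite mxE lap_offdiag // opprK.
suff -> : A a b = 0 by rewrite mul0r.
apply/eqP; apply: contraNT nia => Aab.
apply: connect_trans ib _; exact: connect1.
Qed.

Lemma sc_irr (R : realType) n (A : 'M[R]_n) :
  strongly_connected A -> irreducible_mx (laplacian A).
Proof.
move=> sc [s [k [k0 kn Hz]]].
have j0 : (0 < n)%N by apply: ltn_trans kn.
pose x := s (Ordinal j0). pose y := s (Ordinal kn).
have := @connect_ind _ (edge A) (fun v => ((s^-1)%g v < k)%N) x y.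
rewrite /x /y !permK /= k0 ltnn => H; suff : false by [].
apply: H (sc _ _) isT => a b eab Pa; rewrite ltnNge; apply/negP => Pb.
have := Hz _ _ Pb Pa; rewrite !permKV.
have ba : b != a by apply: contraTneq Pa => E; rewrite -E -leqNgt.
by rewrite lap_offdiag // => /eqP; rewrite oppr_eq0 (negPf eab).
Qed.

Unset Implicit Arguments.

Theorem lemma5 (R : realType) (n : nat) (A : 'M[R]_n) :
  (corank (laplacian A) = 1%N -> has_rooted_spanning_tree A) /\
  (EEP (- laplacian A) \/
     (weight_balanced (laplacian A) /\ corank (laplacian A) = 1%N) ->
   irreducible_mx (laplacian A) /\ strongly_connected A).
Proof.
split.
  case: n A => [|m] A Hc; first by rewrite /corank sub0n in Hc.
  case: (@arg_minnP _ (@ord0 m) predT (fun x => #|Anc A x|) isT) => x _ Hmin.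
  exists x => i; case/boolP: (connect (edge A) x i) => // nxi; exfalso.
  have xS : x \in Anc A x by rewrite inE connect0.
  have [w1 [w10 w1L w1S]] := key xS (@Anc_closed _ _ A x) (lap_rowsum A).
  have iS : i \in Anc A i by rewrite inE connect0.
  have [w2 [w20 w2L w2S]] := key iS (@Anc_closed _ _ A i) (lap_rowsum A).
  have [a w2a] := kern1 Hc w10 w1L w2L.
  have [c Hc2] : exists c, w2 0 c != 0.
    case/boolP: [exists c, w2 0 c != 0] => [/existsP //|/existsPn H].
    by case/negP: w20; apply/eqP/rowP => k; rewrite mxE; apply/eqP; move: (H k); by rewrite negbK.
  have c2 : c \in Anc A i by apply: contraNT Hc2 => /w2S ->; rewrite eqxx.
  have c1 : c \notin Anc A x.
    apply/negP => c1; case/negP: nxi.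
    have sub : Anc A c \subset Anc A x.
      by apply/fintype.subsetP => k; rewrite !inE => kc; apply: connect_trans kc _; rewrite inE in c1.
    have : Anc A c == Anc A x by rewrite eqEcard sub Hmin.
    move/eqP => E; have : x \in Anc A c by rewrite E inE connect0.
    rewrite inE => xc; apply: connect_trans xc _; by rewrite inE in c2.
  by move: Hc2; rewrite w2a mxE w1S // mulr0 eqxx.
have sc : (EEP (- laplacian A) \/
     (weight_balanced (laplacian A) /\ corank (laplacian A) = 1%N)) -> strongly_connected A.
  move=> H i j; case/boolP: (connect (edge A) i j) => // nij; exfalso.
  case: H => [[t0 [t00 H]]|[wb Hc]].
    have := H t0 (lexx _) j i.
    rewrite /expmx_entry.
    have -> : (fun N : nat => \sum_(k < N) (t0 ^+ k / (k`!)%:R) * ((- laplacian A) ^+ k) j i) = fun=> 0.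
      by apply: funext => N; apply: big1 => k _; rewrite pow_zero // mulr0.
    by rewrite norm_lim_cst ltxx.
  have jS : j \in Anc A j by rewrite inE connect0.
  have [w [w0 wL wS]] := key jS (@Anc_closed _ _ A j) (lap_rowsum A).
  pose one : 'rV[R]_n := \row_k 1.
  have one0 : one != 0 by apply/negP => /eqP /rowP /(_ i); rewrite !mxE => /eqP; rewrite oner_eq0.
  have oneL : one *m laplacian A = 0.
    by apply/rowP => k; rewrite !mxE -[RHS](wb k); apply: eq_bigr => l _; rewrite mxE mul1r.
  have [a wa] := kern1 Hc one0 oneL wL.
  have wi := wS i; rewrite inE (negPf nij) wa !mxE mulr1 in wi.
  by move: w0; rewrite wa (wi isT) scale0r eqxx.
by move=> H; have S := sc H; split => //; exact: sc_irr.
Qed.
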